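(* Let $\mathbf{S}=(1^{n_1},\ast^{m_1},\ldots,1^{n_r},\ast^{m_r})$ with $r\ge1$, all $n_j,m_j\ge1$ and $n_1+\cdots+n_r=m_1+\cdots+m_r=n$ (so $\mathbf{S}$ is a balanced string of length $2n$ with $r$ runs). Then \[ |NC_2(\mathbf{S})|\le\frac{r^{r-1}}{r!}(1+n)^{r-1}. \]
   Context: $1^k$ denotes $k$ consecutive entries $1$ (similarly $\ast^k$). $NC_2(\mathbf{S})$ is the set of non-crossing pairings of the $2n$ positions of $\mathbf{S}$ in which each pair joins a position carrying $1$ with a position carrying $\ast$. *)

(* Defs.v *)
From mathcomp Require Import all_boot all_order all_algebra.
Set Implicit Arguments. Unset Strict Implicit. Unset Printing Implicit Defensive.

(* A string over {1, *} is encoded as a seq bool: true = 1, false = *. *)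

Definition run_string (ns ms : seq nat) : seq bool :=
  flatten [seq nseq nm.1 true ++ nseq nm.2 false | nm <- zip ns ms].

(* A pairing is encoded as a fixed-point-free involution p of the positions
   (p i = partner of i). *)
Definition NC2 (S : seq bool) : {set {ffun 'I_(size S) -> 'I_(size S)}} :=
  [set p : {ffun 'I_(size S) -> 'I_(size S)} |
     [forall i, [&& p (p i) == i, p i != i &
                    nth false S i != nth false S (p i)]]
  && [forall a : 'I_(size S), forall b : 'I_(size S), ~~ [&& (a < b)%N, (b < p a)%N & (p a < p b)%N]]].

(* Main.v *)
Require Import Defs.
From mathcomp Require Import all_boot all_order all_algebra.
From mathcomp Require Import zify ring.
From Stdlib Require Import Classical_Prop Classical_Pred_Type.
Set Implicit Arguments. Unset Strict Implicit. Unset Printing Implicit Defensive.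

Definition ncp (s : seq bool) (f : nat -> nat) : Prop :=
  (forall i, i < size s -> f i < size s /\ f (f i) = i /\
      nth false s i != nth false s (f i))
  /\ (forall a b, a < size s -> b < size s -> ~ (a < b /\ b < f a /\ f a < f b)).

Lemma ncp_inv s f i : ncp s f -> i < size s -> f (f i) = i.
Proof. by move=> [H _] /H [_ []]. Qed.
Lemma ncp_lt s f i : ncp s f -> i < size s -> f i < size s.
Proof. by move=> [H _] /H []. Qed.
Lemma ncp_ty s f i : ncp s f -> i < size s -> nth false s i != nth false s (f i).
Proof. by move=> [H _] /H [_ []]. Qed.
Lemma ncp_nc s f a b : ncp s f -> a < size s -> b < size s -> a < b -> b < f a -> f a < f b -> False.
Proof. by move=> [_ H] ha hb h1 h2 h3; apply: (H a b ha hb). Qed.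
Lemma ncp_neq s f i : ncp s f -> i < size s -> f i != i.
Proof. move=> H hi; apply/eqP=> E; move: (ncp_ty H hi); by rewrite E eqxx. Qed.

Lemma ncp_interior s f a y : ncp s f -> a < size s -> a < f a -> a < y -> y < f a ->
  a < f y /\ f y < f a.
Proof.
move=> H ha haf hay hyf.
have hfa := ncp_lt H ha.
have hy : y < size s by lia.
have hfy := ncp_lt H hy.
have iy := ncp_inv H hy.
have ia := ncp_inv H ha.
have H1 : f y < f a.
  case: (ltngtP (f y) (f a)) => // [h1|h1].
  - exfalso; exact: (ncp_nc H ha hy hay hyf h1).
  - by move: (congr1 f h1); rewrite iy ia => E; lia.
split=> //.
case: (ltngtP a (f y)) => // [h2|h2].
- exfalso; apply: (ncp_nc H hfy ha h2); by rewrite iy.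
- by move: (congr1 f h2); rewrite iy => E; lia.
Qed.

Definition lft (a b i : nat) := if i < a then i else i + (b - a).
Definition unl (a b j : nat) := if j < a then j else j - (b - a).

Section Split.
Variables (s : seq bool) (f : nat -> nat) (a b : nat).
Hypothesis Hf : ncp s f.
Hypothesis hab : a <= b.
Hypothesis hb : b <= size s.
Hypothesis hcl : forall i, a <= i < b -> a <= f i < b.

Let s' := take a s ++ drop b s.
Lemma size_s' : size s' = size s - (b - a).
Proof. rewrite /s' size_cat size_take size_drop; case: ifP; lia. Qed.

Lemma nth_s' i : i < size s' -> nth false s' i = nth false s (lft a b i).
Proof.
rewrite size_s' /s' /lft => hi.
have ha : a <= size s by lia.
rewrite nth_cat size_takel //; case: ifP => h1.
- by rewrite nth_take.
- by rewrite nth_drop; congr nth; lia.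
Qed.

Lemma out_out j : j < size s -> ~~ (a <= j < b) -> ~~ (a <= f j < b).
Proof.
move=> hj hn; apply/negP=> /hcl; rewrite (ncp_inv Hf hj) => h.
by rewrite h in hn.
Qed.

Lemma lft_out i : i < size s' -> lft a b i < size s /\ ~~ (a <= lft a b i < b).
Proof. rewrite size_s' /lft; case: ifP => h; split; lia. Qed.

Lemma lft_unl j : ~~ (a <= j < b) -> lft a b (unl a b j) = j.
Proof.
move=> hj; rewrite /lft /unl; case: (ltnP j a) => h /=; first by rewrite h.
case: ifP => ?; lia.
Qed.

Lemma unl_lt j : j < size s -> ~~ (a <= j < b) -> unl a b j < size s'.
Proof. move=> *; rewrite size_s' /unl; case: (ltnP j a) => ?; lia. Qed.

Lemma unl_mono j k : ~~ (a <= j < b) -> ~~ (a <= k < b) -> (unl a b j < unl a b k) = (j < k).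
Proof. move=> *; rewrite /unl; case: (ltnP j a) => ?; case: (ltnP k a) => ?; lia. Qed.

Lemma lft_mono i k : (lft a b i < lft a b k) = (i < k).
Proof. rewrite /lft; case: (ltnP i a) => ?; case: (ltnP k a) => ?; lia. Qed.

Lemma unl_lft i : unl a b (lft a b i) = i.
Proof.
rewrite /lft /unl; case: (ltnP i a) => h /=; first by rewrite h.
case: ifP => ?; lia.
Qed.

Lemma split_ncp : ncp s' (fun i => unl a b (f (lft a b i))).
Proof.
split.
- move=> i hi; have [l1 l2] := lft_out hi.
  have hf1 := ncp_lt Hf l1.
  have ho := out_out l1 l2.
  split; first exact: unl_lt.
  rewrite /= lft_unl // (ncp_inv Hf l1) unl_lft; split=> //.
  rewrite nth_s' // (nth_s' (unl_lt hf1 ho)) lft_unl //; exact: ncp_ty.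
- move=> x y hx hy [h1 [h2 h3]].
  have [lx1 lx2] := lft_out hx; have [ly1 ly2] := lft_out hy.
  have ox := out_out lx1 lx2; have oy := out_out ly1 ly2.
  rewrite unl_mono // in h3.
  rewrite -{1}(unl_lft y) unl_mono // in h2.
  rewrite -(lft_mono) in h1.
  exact: (ncp_nc Hf lx1 ly1 h1 h2 h3).
Qed.

Lemma split_rec (g h : nat -> nat) :
  (forall i, i < size s' -> g i = unl a b (f (lft a b i))) ->
  (forall i, a <= i < b -> f i = h i) ->
  forall i, i < size s -> f i = (if a <= i < b then h i else lft a b (g (unl a b i))).
Proof.
move=> Hg Hh i hi; case: ifP => hin; first by rewrite Hh.
have hn : ~~ (a <= i < b) by rewrite hin.
rewrite Hg ?unl_lt // lft_unl // lft_unl //.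
exact: out_out.
Qed.
End Split.

Definition covers (s : seq bool) (L : seq (nat -> nat)) : Prop :=
  forall f, ncp s f -> exists g, List.In g L /\ forall j, j < size s -> f j = g j.

Definition fp (N : nat) (p : {ffun 'I_N -> 'I_N}) (i : nat) : nat :=
  if insub i is Some o then nat_of_ord (p o) else i.

Lemma fpE N (p : {ffun 'I_N -> 'I_N}) (o : 'I_N) : fp p o = p o.
Proof. by rewrite /fp valK. Qed.

Lemma NC2_ncp S p : p \in NC2 S -> ncp S (fp p).
Proof.
rewrite inE => /andP [/forallP H1 /forallP H2].
split.
- move=> i hi; have -> : i = Ordinal hi by [].
  rewrite !fpE; have /and3P [/eqP e1 _ e3] := H1 (Ordinal hi).
  by rewrite e1; split.
- move=> x y hx hy.
  have -> : x = Ordinal hx by []. have -> : y = Ordinal hy by [].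
  rewrite !fpE.
  move: (H2 (Ordinal hx)) => /forallP /(_ (Ordinal hy)) /negP H [h1 [h2 h3]].
  by apply: H; rewrite h1 h2 h3.
Qed.

Lemma In_has T (P : pred T) x L : List.In x L -> P x -> has P L.
Proof.
elim: L => //= y L IH [-> ->|/IH h hp] //; by rewrite h ?orbT.
Qed.

Lemma card_NC2 S L : covers S L -> #|NC2 S| <= size L.
Proof.
move=> HL.
set N := size S.
pose P (p : {ffun 'I_N -> 'I_N}) := fun g : nat -> nat => [forall j : 'I_N, fp p j == g j].
pose idx p := find (P p) L.
have Hidx : forall p, p \in NC2 S -> idx p < size L /\ P p (nth id L (idx p)).
  move=> p /NC2_ncp /HL [g [gin gag]].
  have hh : has (P p) L.
    apply: (In_has gin); apply/forallP => j; apply/eqP; exact: gag.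
  by rewrite /idx -has_find hh; split=> //; apply: nth_find.
have inj : {in NC2 S &, injective idx}.
  move=> p q hp hq e.
  have [_ /forallP Pp] := Hidx p hp; have [_ /forallP Pq] := Hidx q hq.
  apply/ffunP => j; apply/val_inj => /=.
  rewrite -(fpE p j) -(fpE q j).
  move: (Pp j) (Pq j); rewrite e => /eqP -> /eqP ->. by [].
rewrite cardE.
have <- : size (map idx (enum (NC2 S))) = size (enum (NC2 S)) by rewrite size_map.
rewrite -(size_iota 0 (size L)).
apply: uniq_leq_size.
  rewrite map_inj_in_uniq ?enum_uniq //.
  by move=> x y; rewrite !mem_enum; apply: inj.
move=> k /mapP [p]; rewrite mem_enum => /Hidx [h _] ->.
by rewrite mem_iota.
Qed.

Fixpoint rs_from (b : bool) (lens : seq nat) : seq bool :=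
  match lens with [::] => [::] | l :: ls => nseq l b ++ rs_from (~~ b) ls end.
Definition rs lens := rs_from true lens.
Definition bs (lens : seq nat) k := sumn (take k lens).
Fixpoint blk (lens : seq nat) (i : nat) : nat :=
  match lens with [::] => 0 | l :: ls => if i < l then 0 else (blk ls (i - l)).+1 end.

Lemma size_rs_from b lens : size (rs_from b lens) = sumn lens.
Proof. by elim: lens b => //= l ls IH b; rewrite size_cat size_nseq IH. Qed.
Lemma size_rs lens : size (rs lens) = sumn lens.
Proof. exact: size_rs_from. Qed.

Lemma nth_rs_from b lens i : i < sumn lens ->
  nth false (rs_from b lens) i = b (+) odd (blk lens i).
Proof.
elim: lens b i => //= l ls IH b i hi.
rewrite nth_cat size_nseq; case: ifP => h.
  by rewrite nth_nseq h addbF.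
rewrite IH; last by lia.
by rewrite oddS; case: b; case: (odd _).
Qed.

Lemma nth_rs lens i : i < sumn lens -> nth false (rs lens) i = ~~ odd (blk lens i).
Proof. by move=> h; rewrite /rs nth_rs_from. Qed.

Lemma bs0 lens : bs lens 0 = 0. Proof. by rewrite /bs take0. Qed.
Lemma bsS l ls k : bs (l :: ls) k.+1 = l + bs ls k. Proof. by []. Qed.

Lemma blk_spec lens i : i < sumn lens ->
  blk lens i < size lens /\ bs lens (blk lens i) <= i < bs lens (blk lens i).+1.
Proof.
elim: lens i => //= l ls IH i hi.
case: ifP => h.
  by rewrite bs0 /bs /= take0 /=; split=> //; lia.
have [h1 h2] := IH (i - l) ltac:(lia).
rewrite !bsS; split; lia.
Qed.

Lemma bs_mono lens k k' : k <= k' -> bs lens k <= bs lens k'.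
Proof.
move=> h; rewrite /bs -(subnKC h) takeD sumn_cat; lia.
Qed.

Lemma bs_le lens k : bs lens k <= sumn lens.
Proof. by rewrite /bs -{2}(cat_take_drop k lens) sumn_cat; lia. Qed.

Lemma bs_size lens k : size lens <= k -> bs lens k = sumn lens.
Proof. by move=> h; rewrite /bs take_oversize. Qed.

Lemma bs_succ lens k : k < size lens -> bs lens k.+1 = bs lens k + nth 0 lens k.
Proof. by move=> h; rewrite /bs (take_nth 0 h) -cats1 sumn_cat /=; lia. Qed.

Lemma blk_ge lens i k : i < sumn lens -> bs lens k <= i -> k <= blk lens i.
Proof.
move=> hi hk; have [_ /andP [_ h2]] := blk_spec hi.
rewrite leqNgt; apply/negP => hlt.
have := bs_mono lens hlt; lia.
Qed.

Lemma blk_lt lens i k : i < sumn lens -> i < bs lens k -> blk lens i < k.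
Proof.
move=> hi hk; have [_ /andP [h1 _]] := blk_spec hi.
rewrite ltnNge; apply/negP => hle.
have := bs_mono lens hle; lia.
Qed.

Lemma blk_eq lens i k : i < sumn lens -> bs lens k <= i < bs lens k.+1 -> blk lens i = k.
Proof.
move=> hi /andP [h1 h2]; apply/eqP; rewrite eqn_leq.
by rewrite (blk_ge hi h1) -ltnS (blk_lt hi h2).
Qed.

Lemma nth_rs_blk lens i k : bs lens k <= i < bs lens k.+1 ->
  nth false (rs lens) i = ~~ odd k.
Proof.
move=> h; have hi : i < sumn lens.
  have := bs_le lens k.+1; lia.
by rewrite nth_rs // (blk_eq hi h).
Qed.

Definition hh (u l t i : nat) :=
  if i < u + t then (u + u).-1 - i else (u + l + (u + l)).-1 - i.

Lemma ncp_tyN s f i : ncp s f -> i < size s -> nth false s (f i) = ~~ nth false s i.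
Proof. by move=> H hi; move: (ncp_ty H hi); case: (nth _ _ i); case: (nth _ _ (f i)). Qed.

Section EarB.
Variables (s : seq bool) (f : nat -> nat) (u l L1 L2 : nat) (x : bool).
Hypothesis Hf : ncp s f.
Hypothesis hsz : u + l + L2 <= size s.
Hypothesis hL1 : L1 <= u.
Hypothesis tyA : forall i, u <= i < u + l -> nth false s i = x.
Hypothesis tyL : forall i, u - L1 <= i < u -> nth false s i = ~~ x.
Hypothesis tyR : forall i, u + l <= i < u + l + L2 -> nth false s i = ~~ x.
Hypothesis rng : forall i, u <= i < u + l -> u - L1 <= f i < u + l + L2.

Lemma blk_out i : u <= i < u + l -> f i < u \/ u + l <= f i.
Proof.
move=> hi; have hs : i < size s by lia.
have h1 := ncp_tyN Hf hs; rewrite (tyA hi) in h1.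
case: (ltnP (f i) u) => h2; [by left|].
case: (ltnP (f i) (u + l)) => h3; [|by right].
by move: (tyA (i := f i) ltac:(lia)); rewrite h1; case: x.
Qed.

Lemma prefixP i i' : u <= i -> i < i' -> i' < u + l -> f i' < u -> f i < u.
Proof.
move=> h1 h2 h3 h4.
case: (blk_out (i:=i) ltac:(lia)) => // h5.
exfalso.
have hi' : i' < size s by lia.
have hfi' : f i' < size s by lia.
apply: (ncp_nc Hf hfi' (_ : i < size s)); try lia.
all: rewrite (ncp_inv Hf hi'); lia.
Qed.

Lemma earB : exists t, [/\ t <= l, t <= L1, l - t <= L2 &
   forall i, u - t <= i < u + l + l - t -> f i = hh u l t i].
Proof.
pose t := find (fun k => u <= f (u + k)) (iota 0 l).
have tl : t <= l by rewrite /t; have := find_size (fun k => u <= f (u + k)) (iota 0 l); rewrite size_iota.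
have HL : forall k, k < t -> f (u + k) < u.
  move=> k hk; have := before_find 0 hk; rewrite nth_iota ?add0n; last by lia.
  by move=> e; rewrite ltnNge e.
have HR : forall k, t <= k < l -> u + l <= f (u + k).
  move=> k /andP [hk1 hk2].
  have ht : t < l by lia.
  have hfu : u <= f (u + t).
    have hh0 : has (fun k => u <= f (u + k)) (iota 0 l) by rewrite has_find size_iota.
    by have := nth_find 0 hh0; rewrite nth_iota ?add0n.
  case: (blk_out (i := u + k) ltac:(lia)) => // h.
  case: (ltngtP k t) => hkt; try lia.
  have := prefixP (i := u + t) (i' := u + k) ltac:(lia) ltac:(lia) ltac:(lia) h; lia.
  by move: h; rewrite hkt; lia.
have Lf : forall k, k < t -> f (u + k) = u - 1 - k.
  elim/ltn_ind => k IH hk.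
  have hik : u + k < size s by lia.
  have hv := HL k hk.
  have hv2 := rng (i := u + k) ltac:(lia).
  set v := f (u + k) in hv hv2 *.
  have hvs : v < size s by lia.
  have fv : f v = u + k by rewrite /v (ncp_inv Hf hik).
  case: (ltngtP v (u - 1 - k)) => hc //.
  - exfalso.
    pose y := u - 1 - k.
    have hyd : y = u - 1 - k := erefl.
    have [hy1 hy2] : v < f y /\ f y < f v.
      apply: (ncp_interior Hf hvs); rewrite ?fv; lia.
    have hys : y < size s by lia.
    have ty0 : nth false s y = ~~ x by apply: tyL; lia.
    have ty := ncp_tyN Hf hys; rewrite ty0 negbK in ty.
    case: (ltnP (f y) u) => hfy.
      by move: (tyL (i := f y) ltac:(lia)); rewrite ty; case: x.
    have hk' : f y - u < k by lia.
    have := IH _ hk' ltac:(lia).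
    have -> : u + (f y - u) = f y by lia.
    rewrite (ncp_inv Hf hys); lia.
  - exfalso.
    have hk' : u - 1 - v < k by lia.
    have := IH _ hk' ltac:(lia).
    have -> : u - 1 - (u - 1 - v) = v by lia.
    move/(congr1 f); rewrite fv (ncp_inv Hf) //; lia.
have Rf : forall k, k < l - t -> f (u + l - 1 - k) = u + l + k.
  elim/ltn_ind => k IH hk.
  have hik : u + l - 1 - k < size s by lia.
  have hv := HR (l - 1 - k) ltac:(lia).
  have -> : u + l - 1 - k = u + (l - 1 - k) by lia.
  have hv2 := rng (i := u + (l - 1 - k)) ltac:(lia).
  set v := f (u + (l - 1 - k)) in hv hv2 *.
  have hik' : u + (l - 1 - k) < size s by lia.
  have hvs : v < size s by lia.
  have fv : f v = u + (l - 1 - k) by rewrite /v (ncp_inv Hf hik').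
  case: (ltngtP v (u + l + k)) => hc //.
  - exfalso.
    have hk' : v - u - l < k by lia.
    have := IH _ hk' ltac:(lia).
    have -> : u + l - 1 - (v - u - l) = u + (l - 1 - (v - u - l)) by lia.
    have -> : u + l + (v - u - l) = v by lia.
    move/(congr1 f); rewrite fv (ncp_inv Hf) //; lia.
  - exfalso.
    pose y := u + l + k.
    have hyd : y = u + l + k := erefl.
    have [hy1 hy2] : u + (l - 1 - k) < f y /\ f y < f (u + (l - 1 - k)).
      apply: (ncp_interior Hf hik'); rewrite -/v; lia.
    rewrite -/v in hy2.
    have hys : y < size s by lia.
    have ty0 : nth false s y = ~~ x by apply: tyR; lia.
    have ty := ncp_tyN Hf hys; rewrite ty0 negbK in ty.
    case: (ltnP (f y) (u + l)) => hfy; last first.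
      by move: (tyR (i := f y) ltac:(lia)); rewrite ty; case: x.
    have hk' : u + l - 1 - f y < k by lia.
    have := IH _ hk' ltac:(lia).
    have -> : u + l - 1 - (u + l - 1 - f y) = f y by lia.
    rewrite (ncp_inv Hf hys); lia.
have tu : t <= u.
  case: (leqP t u) => // htu; exfalso.
  case: (posnP u) => hu0.
    have := HL 0 ltac:(lia); lia.
  have e1 := Lf u htu; have e2 := Lf (u - 1) ltac:(lia).
  have s1 : u + u < size s by lia.
  have s2 : u + (u - 1) < size s by lia.
  have := ncp_inv Hf s1; have := ncp_inv Hf s2.
  rewrite e1 e2; have -> : u - 1 - (u - 1) = u - 1 - u by lia.
  move=> -> ; lia.
exists t; split=> //.
- case: (posnP t) => ht0; first by lia.
  have := Lf (t - 1) ltac:(lia).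
  have := rng (i := u + (t - 1)) ltac:(lia); lia.
- case: (posnP (l - t)) => ht0; first by lia.
  have := Rf (l - t - 1) ltac:(lia).
  have := rng (i := u + l - 1 - (l - t - 1)) ltac:(lia); lia.
- move=> i hi; rewrite /hh.
  case: (ltnP i u) => h1.
  + have hk : u - 1 - i < t by lia.
    have e := Lf _ hk.
    have e2 : u - 1 - (u - 1 - i) = i by lia.
    rewrite e2 in e.
    have hs : u + (u - 1 - i) < size s by lia.
    have := ncp_inv Hf hs; rewrite e => ->.
    have -> : i < u + t = true by lia.
    lia.
  case: (ltnP i (u + t)) => h2.
  + have := Lf (i - u) ltac:(lia); have -> : u + (i - u) = i by lia.
    move=> ->; lia.
  case: (ltnP i (u + l)) => h3.
  + have := Rf (u + l - 1 - i) ltac:(lia).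
    have -> : u + l - 1 - (u + l - 1 - i) = i by lia.
    move=> ->; lia.
  + have := Rf (i - u - l) ltac:(lia).
    have -> : u + l + (i - u - l) = i by lia.
    have hs : u + l - 1 - (i - u - l) < size s by lia.
    move/(congr1 f); rewrite (ncp_inv Hf hs) => <-; lia.
Qed.
End EarB.

Section EarA.
Variables (lens : seq nat) (f : nat -> nat).
Hypothesis Hf : ncp (rs lens) f.
Hypothesis H4 : 4 <= size lens.
Let N := sumn lens.
Lemma szN : size (rs lens) = N. Proof. exact: size_rs. Qed.

Definition longa a := [/\ a < N, a < f a & blk lens a + 2 <= blk lens (f a)].

Definition earP e := [/\ ~~ odd e, 2 <= e, e.+2 <= size lens &
  forall i, bs lens e <= i < bs lens e.+1 -> bs lens e.-1 <= f i < bs lens e.+2].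

Lemma fN i : i < N -> f i < N.
Proof. by move=> h; have := ncp_lt Hf (i := i); rewrite szN; apply. Qed.
Lemma fI i : i < N -> f (f i) = i.
Proof. by move=> h; apply: (ncp_inv Hf); rewrite szN. Qed.

Lemma in_blk i k : bs lens k <= i < bs lens k.+1 -> i < N.
Proof. have := bs_le lens k.+1; rewrite /N; lia. Qed.

Lemma bad_long e i : ~~ odd e -> 2 <= e -> bs lens e <= i < bs lens e.+1 ->
  ~ (bs lens e.-1 <= f i < bs lens e.+2) ->
  (longa i /\ f i - i > 0) \/ (longa (f i) /\ i - f i > 0).
Proof.
move=> he e2 hi hn.
have hiN := in_blk hi.
have bi := blk_eq hiN hi.
have hfN := fN hiN.
case: (ltnP (f i) (bs lens e.+2)) => h2.
- right.
  have h1 : f i < bs lens e.-1 by lia.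
  have hb := blk_lt hfN h1.
  have : bs lens e.-1 <= bs lens e by apply: bs_mono; lia.
  move=> hbs.
  split; last by lia.
  split=> //; first by rewrite fI //; lia.
  rewrite fI // bi; lia.
- left.
  have hb := blk_ge hfN h2.
  have : bs lens e.+1 <= bs lens e.+2 by apply: bs_mono.
  move=> hbs.
  split; last by lia.
  split=> //; first by lia.
  rewrite bi; lia.
Qed.

Lemma long_ear d a : longa a -> f a - a <= d -> exists e, earP e.
Proof.
elim/ltn_ind: d a => d IH a [ha haf hbl] hd.
set al := blk lens a in hbl *.
set be := blk lens (f a) in hbl *.
have hfaN := fN ha.
have [alsz /andP [ba1 ba2]] := blk_spec ha.
have [besz /andP [bb1 bb2]] := blk_spec hfaN.
rewrite -/al in alsz ba1 ba2; rewrite -/be in besz bb1 bb2.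
have tya := nth_rs ha; have tyb := nth_rs hfaN.
have tyd := ncp_ty Hf (i := a); rewrite szN in tyd; have {}tyd := tyd ha.
rewrite tya tyb in tyd.
have hne : be != al + 2.
  apply/eqP=> E; move: tyd; rewrite -/al -/be E addn2 /=.
  by rewrite negbK; case: (odd al).
pose e := if odd al then al.+1 else al.+2.
have he : ~~ odd e by rewrite /e; case: ifP => h /=; rewrite ?h ?negbK.
have he2 : 2 <= e by rewrite /e; case: ifP => h; [move: h; case: (al) => //= ?; lia | lia].
have he3 : e.+1 <= be by rewrite /e; case: ifP => h; lia.
have hse : e.+2 <= size lens by lia.
case: (classic (forall i, bs lens e <= i < bs lens e.+1 -> bs lens e.-1 <= f i < bs lens e.+2)) => Hall.
  by exists e; split.
have [i Hi] : exists i, ~ (bs lens e <= i < bs lens e.+1 -> bs lens e.-1 <= f i < bs lens e.+2).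
  by apply: not_all_ex_not.
have hi : bs lens e <= i < bs lens e.+1.
  by case: (boolP (bs lens e <= i < bs lens e.+1)) => // h; exfalso; apply: Hi => hP; rewrite hP in h.
have hn : ~ (bs lens e.-1 <= f i < bs lens e.+2) by move=> h; apply: Hi.
have hia : a < i.
  have : bs lens al.+1 <= bs lens e by apply: bs_mono; rewrite /e; case: ifP; lia.
  lia.
have hif : i < f a.
  have : bs lens e.+1 <= bs lens be by apply: bs_mono.
  lia.
have [hfi1 hfi2] := ncp_interior Hf (a := a) (y := i) ltac:(rewrite szN; lia) haf hia hif.
case: (bad_long he he2 hi hn) => [[hl _]|[hl _]].
- apply: (IH (f i - i) _ i hl) => //; lia.
- apply: (IH (i - f i) _ (f i) hl); last by rewrite fI; [lia| exact: in_blk hi].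
  lia.
Qed.

Lemma earA : exists e, earP e.
Proof.
case: (classic (exists a, longa a)) => [[a ha]|hno].
  exact: (long_ear ha (leqnn _)).
exists 2; split=> //.
move=> i hi.
case: (classic (bs lens 1 <= f i < bs lens 4)) => // hn.
exfalso; apply: hno.
case: (bad_long (e := 2) isT (leqnn _) hi hn) => [[hl _]|[hl _]]; by eexists; exact: hl.
Qed.
End EarA.

Definition blens (ps : seq (nat * nat)) := flatten [seq [:: x.1; x.2] | x <- ps].
Definition flat (ps : seq (nat * nat)) :=
  flatten [seq nseq x.1 true ++ nseq x.2 false | x <- ps].

Lemma rsE ps : rs (blens ps) = flat ps.
Proof. elim: ps => // x ps IH. rewrite /rs /=. move: IH; rewrite /rs /blens => ->. by rewrite /flat /= catA. Qed.

Lemma run_stringE ns ms : run_string ns ms = rs (blens (zip ns ms)).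
Proof. by rewrite rsE. Qed.

Lemma flat_cat p q : flat (p ++ q) = flat p ++ flat q.
Proof. by rewrite /flat map_cat flatten_cat. Qed.

Lemma flat_cons x s : flat (x :: s) = nseq x.1 true ++ nseq x.2 false ++ flat s.
Proof. by rewrite /flat /= catA. Qed.

Lemma size_flat ps : size (flat ps) = sumn (blens ps).
Proof. by rewrite -rsE size_rs. Qed.

Lemma size_blens ps : size (blens ps) = (size ps).*2.
Proof. by elim: ps => //= x ps IH; rewrite IH ?doubleS. Qed.

Lemma take_blens ps j : take j.*2 (blens ps) = blens (take j ps).
Proof. by elim: ps j => [|x ps IH] [|j] //=; rewrite ?doubleS /= IH. Qed.

Lemma nth_blens_even ps j : nth 0 (blens ps) j.*2 = (nth (0,0) ps j).1.
Proof.
elim: ps j => [|x ps IH] [|j] //=; rewrite ?nth_nil //.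
Qed.

Lemma nth_blens_odd ps j : nth 0 (blens ps) j.*2.+1 = (nth (0,0) ps j).2.
Proof.
elim: ps j => [|x ps IH] [|j] //=; rewrite ?nth_nil //.
Qed.

Lemma bs_even ps j : bs (blens ps) j.*2 = sumn (blens (take j ps)).
Proof. by rewrite /bs take_blens. Qed.

Lemma take_nseq_cat (X Z : seq bool) n k b : k <= n ->
  take (size X + k) (X ++ nseq n b ++ Z) = X ++ nseq k b.
Proof.
move=> h; rewrite take_cat ltnNge leq_addr /= addKn take_cat size_nseq.
case: ltngtP h => // h _.
  by rewrite take_nseq; [| lia].
by rewrite h subnn take0 cats0.
Qed.

Lemma drop_nseq_cat (X Z : seq bool) n k b : k <= n ->
  drop (size X + k) (X ++ nseq n b ++ Z) = nseq (n - k) b ++ Z.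
Proof.
move=> h; rewrite drop_cat ltnNge leq_addr /= addKn drop_cat size_nseq.
case: ltngtP h => // h _.
  by rewrite drop_nseq.
by rewrite h subnn drop0.
Qed.

Definition rem_ps (ps : seq (nat * nat)) j :=
  take j.-1 ps ++ ((nth (0,0) ps j.-1).1,
                   (nth (0,0) ps j.-1).2 + (nth (0,0) ps j).2 - (nth (0,0) ps j).1)
  :: drop j.+1 ps.

Lemma ps_split ps j : 0 < j -> j < size ps ->
  ps = take j.-1 ps ++ nth (0,0) ps j.-1 :: nth (0,0) ps j :: drop j.+1 ps.
Proof.
move=> h0 h1.
rewrite -{1}(cat_take_drop j.-1 ps); congr (_ ++ _).
rewrite (drop_nth (0,0)); last by lia.
rewrite (drop_nth (0,0)); last by lia.
by have -> : j.-1.+1 = j by lia.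
Qed.

Lemma rem_string ps j t : 0 < j -> j < size ps ->
  let u := bs (blens ps) j.*2 in
  let l := (nth (0,0) ps j).1 in
  let p := (nth (0,0) ps j.-1).2 in
  let q := (nth (0,0) ps j).2 in
  t <= l -> t <= p -> l - t <= q ->
  take (u - t) (rs (blens ps)) ++ drop (u + l + l - t) (rs (blens ps)) = rs (blens (rem_ps ps j)).
Proof.
move=> h0 h1 u l p q htl htp htq.
set P := take j.-1 ps; set Q := drop j.+1 ps.
set A := nth (0,0) ps j.-1; set B := nth (0,0) ps j.
have Eps := ps_split h0 h1; rewrite -/P -/Q -/A -/B in Eps.
have ep : p = A.2 := erefl. have el : l = B.1 := erefl. have eq : q = B.2 := erefl.
have hu : u = size (flat P) + A.1 + A.2.
  rewrite /u bs_even size_flat.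
  have -> : take j ps = P ++ [:: A].
    rewrite {1}Eps take_cat /P size_take.
    have -> : j.-1 < size ps by lia.
    rewrite ltnNge (_ : j.-1 <= j) ?leq_pred //=.
    by have -> : j - j.-1 = 1 by lia.
  by rewrite /blens map_cat flatten_cat sumn_cat /=; lia.
rewrite /rem_ps -/P -/Q -/A -/B !rsE {1 2}Eps !flat_cat !flat_cons /=.
have E1 : take (u - t) (flat P ++ nseq A.1 true ++ nseq A.2 false ++
     nseq B.1 true ++ nseq B.2 false ++ flat Q) = (flat P ++ nseq A.1 true) ++ nseq (A.2 - t) false.
  have -> : u - t = size (flat P ++ nseq A.1 true) + (A.2 - t).
    by rewrite size_cat size_nseq hu; lia.
  rewrite catA take_nseq_cat //; lia.
have E2 : drop (u + l + l - t) (flat P ++ nseq A.1 true ++ nseq A.2 false ++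
     nseq B.1 true ++ nseq B.2 false ++ flat Q) = nseq (B.2 - (l - t)) false ++ flat Q.
  have -> : u + l + l - t = size (flat P ++ nseq A.1 true ++ nseq A.2 false ++ nseq B.1 true) + (l - t).
    by rewrite !size_cat !size_nseq hu /l -/B; lia.
  rewrite !catA -(catA _ (nseq B.2 false)) drop_nseq_cat //; rewrite /q -/B in htq; lia.
rewrite E1 E2 -!catA; congr (_ ++ _ ++ _).
rewrite catA -nseqD; congr (nseq _ _ ++ _).
rewrite /l /p /q -/A -/B in htl htp htq *; lia.
Qed.

Lemma size_rem_ps ps j : 0 < j -> j < size ps -> size (rem_ps ps j) = (size ps).-1.
Proof.
move=> h0 h1; rewrite /rem_ps size_cat /= size_take size_drop.
have -> : j.-1 < size ps by lia.
lia.
Qed.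

Lemma sum_rem_ps ps j : 0 < j -> j < size ps ->
  sumn (map fst (rem_ps ps j)) + (nth (0,0) ps j).1 = sumn (map fst ps).
Proof.
move=> h0 h1; have E := ps_split h0 h1; rewrite /rem_ps [in RHS]E !map_cat !sumn_cat /=; lia.
Qed.

Lemma all_rem_ps ps j : 0 < j -> j < size ps -> all (fun x => 0 < x.1) ps ->
  all (fun x => 0 < x.1) (rem_ps ps j).
Proof.
move=> h0 h1 H; have E := ps_split h0 h1; move: H; rewrite /rem_ps {1}E !all_cat /=.
by case/and4P => -> -> _ ->.
Qed.

Lemma In_cat T (x : T) a b : List.In x a -> List.In x (a ++ b).
Proof. by elim: a => //= y a IH [->|/IH]; [left|right]. Qed.
Lemma In_catr T (x : T) a b : List.In x b -> List.In x (a ++ b).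
Proof. by elim: a => //= y a IH /IH; right. Qed.

Lemma cover_union (X : eqType) (I : seq X) (P : X -> (nat -> nat) -> Prop) (K : nat) s :
  (forall x, x \in I -> exists L, size L <= K /\ forall f, ncp s f -> P x f ->
      exists g, List.In g L /\ forall j, j < size s -> f j = g j) ->
  (forall f, ncp s f -> exists2 x, x \in I & P x f) ->
  exists L, size L <= size I * K /\ covers s L.
Proof.
move=> H1 H2.
suff : exists L, size L <= size I * K /\ forall f, ncp s f -> (exists2 x, x \in I & P x f) ->
      exists g, List.In g L /\ forall j, j < size s -> f j = g j.
  by case=> L [h1 h2]; exists L; split=> // f hf; apply: h2 => //; exact: H2.
elim: I H1 {H2} => [|x I IH] H1.
  by exists [::]; split=> // f _ [x].
have [L1 [s1 c1]] := H1 x (mem_head _ _).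
have [L2 [s2 c2]] := IH (fun y hy => H1 y (@mem_behead _ (x :: I) y hy)).
exists (L1 ++ L2); split; first by rewrite size_cat /= mulSn; lia.
move=> f hf [y]; rewrite inE => /orP [/eqP ->|hy] hp.
  by have [g [gi ga]] := c1 f hf hp; exists g; split=> //; apply: In_cat.
have [g [gi ga]] := c2 f hf (ex_intro2 _ _ y hy hp).
by exists g; split=> //; apply: In_catr.
Qed.

Lemma bern a k : a ^ k + k * a ^ k.-1 <= a.+1 ^ k.
Proof.
elim: k => [|k IH]; first by rewrite !expn0.
case: k IH => [|k] IH.
  by rewrite !expn0 !expn1; lia.
rewrite /= in IH *.
rewrite (expnS a k.+1) (expnS a.+1 k.+1) (expnS a k).
rewrite (expnS a k) in IH.
set X := a ^ k in IH *; set Y := a.+1 ^ k.+1 in IH *.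
have h : a.+1 * (a * X + k.+1 * X) <= a.+1 * Y by rewrite leq_mul2l IH orbT.
nia.
Qed.

Lemma two_pow r : 2 <= r -> 2 * (r.-1) ^ r.-1 <= r ^ r.-1.
Proof.
move=> h; have := bern r.-1 r.-1.
have -> : r.-1.+1 = r by lia.
case: r h => [|[|r]] //= _.
rewrite expnS; lia.
Qed.

Lemma KI r m : 2 <= r -> r <= m ->
  r * (m + r - 2) * r.-1 ^ (r.-2) <= r ^ r.-1 * m.+1.
Proof.
move=> h2 hm.
case: r h2 hm => [|[|[|r]]] //= _ hm.
  by rewrite expn0 expn1; lia.
set P := r.+2 ^ r.+1.
have hT := two_pow (r := r.+3) isT; rewrite /= expnS -/P in hT.
set Q := r.+3 ^ r.+2 in hT *.
have k1 : (m + r.+3 - 2) * r.+4 <= m.+1 * (2 * r.+2) by nia.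
rewrite -(leq_pmul2r (_ : 0 < r.+4)) //.
apply: (@leq_trans (r.+3 * P * (m.+1 * (2 * r.+2)))).
  have -> : r.+3 * (m + r.+3 - 2) * P * r.+4 = r.+3 * P * ((m + r.+3 - 2) * r.+4) by ring.
  by rewrite leq_mul2l k1 orbT.
have -> : r.+3 * P * (m.+1 * (2 * r.+2)) = r.+3 * m.+1 * (2 * (r.+2 * P)) by ring.
apply: (@leq_trans (r.+3 * m.+1 * Q)); first by rewrite leq_mul2l hT orbT.
have -> : Q * m.+1 * r.+4 = r.+4 * m.+1 * Q by ring.
by rewrite !leq_mul2r leqnSn !orbT.
Qed.

Definition comb u l t (g : nat -> nat) i :=
  if (u - t <= i < u + l + l - t) then hh u l t i
  else lft (u - t) (u + l + l - t) (g (unl (u - t) (u + l + l - t) i)).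

Lemma hh_in u l t i : t <= u -> t <= l -> u - t <= i < u + l + l - t ->
  u - t <= hh u l t i < u + l + l - t.
Proof. move=> h1 h2 h3; rewrite /hh; case: ifP => h4; lia. Qed.

Lemma In_map (A B : Type) (g : A -> B) x L : List.In x L -> List.In (g x) (map g L).
Proof. by elim: L => //= y L IH [->|/IH]; [left|right]. Qed.

Definition posl (ps : seq (nat * nat)) := all (fun x => 0 < x.1) ps.

Definition bound (ps : seq (nat * nat)) (k : nat) :=
  (size ps)`! * k <= (size ps) ^ (size ps).-1 * (sumn (map fst ps)).+1 ^ (size ps).-1.

Lemma blens1 a b : blens [:: (a, b)] = [:: a; b]. Proof. by []. Qed.

Lemma base1 a b : covers (rs (blens [:: (a, b)])) [:: fun i => (a + a).-1 - i].
Proof.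
move=> f hf; rewrite blens1 in hf *.
set s := rs [:: a; b] in hf *.
have hsz : size s = a + b by rewrite /s size_rs /=; lia.
have ty0 : forall i, 0 <= i < 0 + a -> nth false s i = true.
  move=> i hi; rewrite /s (@nth_rs_blk _ _ 0) //; rewrite /bs /=; lia.
have ty1 : forall i, 0 + a <= i < 0 + a + b -> nth false s i = ~~ true.
  move=> i hi; rewrite /s (@nth_rs_blk _ _ 1) //; rewrite /bs /=; lia.
have [t [ht ht0 _ hag]] := earB (u := 0) (l := a) (L1 := 0) (L2 := b) (x := true) hf
  ltac:(lia) (leqnn 0) ty0 ltac:(move=> i hi; lia) ty1
  ltac:(move=> i hi; have := ncp_lt hf (i := i); rewrite hsz; lia).
have t0 : t = 0 by lia.
subst t.
exists (fun i => (a + a).-1 - i); split; first by left.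
move=> j hj.
case: (ltnP j (a + a)) => hja.
  rewrite hag; last by lia.
  by rewrite /hh addn0 ltn0 !add0n.
exfalso.
have hjs : j < size s by lia.
have tj : nth false s j = false by have := ty1 j; rewrite /=; apply; lia.
have tfj := ncp_tyN hf hjs; rewrite tj /= in tfj.
have hfj := ncp_lt hf hjs.
case: (ltnP (f j) a) => h.
  have := hag (f j) ltac:(lia); rewrite (ncp_inv hf hjs) /hh.
  rewrite addn0 ltn0 !add0n => E; lia.
by move: (ty1 (f j) ltac:(lia)); rewrite tfj.
Qed.

Lemma sumn_succ (s : seq (nat * nat)) :
  sumn [seq (nth (0,0) s j).1.+1 | j <- iota 0 (size s)] = sumn (map fst s) + size s.
Proof.
have -> : [seq (nth (0,0) s j).1.+1 | j <- iota 0 (size s)] =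
          map (fun x => x.1.+1) (mkseq (nth (0,0) s) (size s)).
  by rewrite /mkseq -map_comp.
rewrite mkseq_nth; elim: s => //= x s IH; lia.
Qed.

Lemma sumn_ge ps : posl ps -> size ps <= sumn (map fst ps).
Proof. elim: ps => //= x ps IH /andP [h1 h2]; have := IH h2; lia. Qed.

Section Step.
Variable ps : seq (nat * nat).
Hypothesis hr : 2 <= size ps.
Hypothesis hpos : posl ps.
Hypothesis IH : forall ps', size ps' < size ps -> posl ps' ->
  exists L, covers (rs (blens ps')) L /\ bound ps' (size L).

Let r := size ps.
Let m := sumn (map fst ps).
Let s := rs (blens ps).
Let bl := blens ps.

Lemma szbl : size bl = r.*2. Proof. exact: size_blens. Qed.

Lemma bs_facts j : 0 < j -> j < r ->
  [/\ bs bl j.*2 = bs bl j.*2.-1 + (nth (0,0) ps j.-1).2,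
      bs bl j.*2.+1 = bs bl j.*2 + (nth (0,0) ps j).1 &
      bs bl j.*2.+2 = bs bl j.*2 + (nth (0,0) ps j).1 + (nth (0,0) ps j).2].
Proof.
move=> h0 h1.
have sz := szbl.
have e1 : j.*2 = (j.-1).*2.+1.+1 by lia.
split.
- rewrite {1}e1 bs_succ; last by lia.
  by rewrite nth_blens_odd; congr (bs _ _ + _); lia.
- by rewrite bs_succ ?nth_blens_even //; lia.
- rewrite bs_succ; last by lia.
  rewrite bs_succ ?nth_blens_even; last by lia.
  by rewrite ?nth_blens_odd; lia.
Qed.

Lemma step : exists L, covers s L /\ bound ps (size L).
Proof.
pose I := [seq (j, t) | j <- iota 1 r.-1, t <- iota 0 (nth (0,0) ps j).1.+1].
pose X := r.-1 ^ r.-2 * m.+1 ^ r.-2.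
pose K := X %/ (r.-1)`!.
pose P (x : nat * nat) (f : nat -> nat) :=
  let j := x.1 in let t := x.2 in
  let u := bs bl j.*2 in let l := (nth (0,0) ps j).1 in
  let p := (nth (0,0) ps j.-1).2 in let q := (nth (0,0) ps j).2 in
  [/\ t <= l, t <= p, l - t <= q &
     forall i, u - t <= i < u + l + l - t -> f i = hh u l t i].
have H1 : forall x, x \in I -> exists L, size L <= K /\ forall f, ncp s f -> P x f ->
      exists g, List.In g L /\ forall j, j < size s -> f j = g j.
  move=> [j t] /allpairsPdep [j' [t' [hj ht [ej et]]]]; subst j' t'.
  rewrite mem_iota in hj.
  have hj0 : 0 < j by lia.
  have hj1 : j < r by lia.
  have szr := size_rem_ps hj0 hj1.
  have [Lj [covj bndj]] := IH (ps' := rem_ps ps j) ltac:(rewrite szr; lia) (all_rem_ps hj0 hj1 hpos).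
  have smj := sum_rem_ps hj0 hj1.
  exists (map (comb (bs bl j.*2) (nth (0,0) ps j).1 t) Lj); split.
    rewrite /bound szr in bndj.
    rewrite size_map /K leq_divRL ?fact_gt0 // (mulnC (size Lj)).
    apply: (leq_trans bndj).
    have -> : r.-1.-1 = r.-2 by [].
    rewrite leq_mul2l; apply/orP; right.
    case: (r.-2) => [|e]; [by rewrite !expn0 | rewrite leq_exp2r //; lia].
  move=> f hf [htl htp htq hag]; rewrite /= in htl htp htq hag.
  have [bf1 bf2 bf3] := bs_facts hj0 hj1.
  set u := bs bl j.*2 in bf1 bf2 bf3 hag *.
  set l := (nth (0,0) ps j).1 in bf2 bf3 htl htq hag *.
  set p := (nth (0,0) ps j.-1).2 in bf1 htp.
  set q := (nth (0,0) ps j).2 in bf3 htq.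
  have hs : size s = sumn bl by rewrite size_rs.
  have hbl := bs_le bl j.*2.+2.
  have hab : u - t <= u + l + l - t by lia.
  have hb : u + l + l - t <= size s by lia.
  have hcl : forall i, u - t <= i < u + l + l - t -> u - t <= f i < u + l + l - t.
    by move=> i hi; rewrite hag //; apply: hh_in => //; lia.
  have Hs' := split_ncp hf hab hb hcl.
  have RS := rem_string (t := t) hj0 hj1 htl htp htq.
  rewrite -/s -/bl -/u -/l in RS.
  rewrite RS in Hs'.
  have [g [gin gag]] := covj _ Hs'.
  exists (comb u l t g); split; first exact: In_map.
  move=> i hi.
  rewrite (split_rec hf hab hb hcl (g := g) (h := hh u l t)) //.
  by move=> i0; rewrite RS => hi0; rewrite gag.
have H2 : forall f, ncp s f -> exists2 x, x \in I & P x f.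
  move=> f hf.
  have h4 : 4 <= size bl by rewrite szbl; lia.
  have [e [he he2 he3 hear]] := @earA bl f hf h4.
  set j := e./2.
  have ej : e = j.*2 by rewrite /j halfK; move: he; case: (odd e) => //= _; lia.
  rewrite szbl in he3.
  have hj0 : 0 < j by lia.
  have hj1 : j < r by lia.
  have [bf1 bf2 bf3] := bs_facts hj0 hj1.
  rewrite ej in hear.
  set u := bs bl j.*2 in bf1 bf2 bf3 hear.
  set l := (nth (0,0) ps j).1 in bf2 bf3.
  set p := (nth (0,0) ps j.-1).2 in bf1.
  set q := (nth (0,0) ps j).2 in bf3.
  have eu : u = bs bl j.*2 := erefl.
  have hs : size s = sumn bl by rewrite size_rs.
  have hbl := bs_le bl j.*2.+2.
  have od1 : odd (j.*2.-1) by rewrite (_ : j.*2.-1 = (j.-1).*2.+1) ?oddS ?odd_double //; lia.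
  have [t [ht1 ht2 ht3 hag]] := @earB s f u l p q true hf ltac:(lia) ltac:(lia)
    ltac:(move=> i hi; rewrite (@nth_rs_blk bl _ j.*2) ?odd_double //; lia)
    ltac:(move=> i hi; rewrite (@nth_rs_blk bl _ j.*2.-1) ?od1 //; rewrite (_ : j.*2.-1.+1 = j.*2); lia)
    ltac:(move=> i hi; rewrite (@nth_rs_blk bl _ j.*2.+1) //= ?odd_double //; lia)
    ltac:(move=> i hi; have := hear i ltac:(lia); lia).
  exists (j, t); last by split.
  apply/allpairsPdep; exists j, t; split=> //; rewrite mem_iota; lia.
have [L [hL hcov]] := cover_union H1 H2.
exists L; split=> //.
rewrite /bound.
have sizeI : size I <= m + r - 2.
  rewrite /I size_allpairs_dep.
  have -> : [seq size (iota 0 (nth (0, 0) ps x).1.+1) | x <- iota 1 r.-1] =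
            [seq (nth (0,0) ps x).1.+1 | x <- iota 1 r.-1].
    by apply: eq_map => x; rewrite size_iota.
  have hr2 := hr; have hp2 := hpos.
  rewrite /r /m; case: (ps) hr2 hp2 => [|x0 ps'] //= hr' /andP [hx0 _].
  have -> : [seq (nth (0, 0) (x0 :: ps') x).1.+1 | x <- iota 1 (size ps')] =
            [seq (nth (0, 0) ps' x).1.+1 | x <- iota 0 (size ps')].
    rewrite -[1]/(1 + 0) iotaDl -map_comp; apply: eq_map => x /=. by rewrite add0n.
  rewrite sumn_succ; lia.
have hK : (r.-1)`! * K <= X by rewrite mulnC /K leq_trunc_div.
have hmr : r <= m by apply: sumn_ge.
have hKI := KI (r := r) (m := m) hr hmr.
have -> : r`! = r * (r.-1)`! by rewrite -{1}(prednK (_ : 0 < r)) ?factS //; lia.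
apply: (@leq_trans (r * size I * ((r.-1)`! * K))).
  have := leq_mul (leqnn (r * (r.-1)`!)) hL.
  have -> : r * (r.-1)`! * (size I * K) = r * size I * ((r.-1)`! * K) by ring.
  done.
apply: (@leq_trans (r * size I * X)); first by rewrite leq_mul2l hK orbT.
apply: (@leq_trans (r * (m + r - 2) * X)); first by rewrite leq_mul2r leq_mul2l sizeI !orbT.
rewrite /X mulnA.
apply: (@leq_trans (r ^ r.-1 * m.+1 * m.+1 ^ r.-2)); first by rewrite leq_mul2r hKI orbT.
rewrite -mulnA -expnS; have -> : r.-2.+1 = r.-1 by lia.
done.
Qed.
End Step.


Lemma main N : forall ps, size ps <= N -> posl ps ->
  exists L, covers (rs (blens ps)) L /\ bound ps (size L).
Proof.
elim: N => [|N IHN] ps hN hp.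
  case: ps hN hp => // _ _.
  exists [:: id]; split=> //.
  by move=> f _; exists id; split; [left|].
case: ps hN hp => [|[a b] [|y rest]] hN hp.
- exists [:: id]; split=> //.
  by move=> f _; exists id; split; [left|].
- exists [:: fun i => (a + a).-1 - i]; split; first exact: base1.
  by rewrite /bound /= expn0 muln1.
- apply: step => //= ps' hs' hp'.
  apply: IHN => //; move: hN hs' => /=; lia.
Qed.

Lemma final_nat ns ms n :
  size ms = size ns -> all (fun k => 0 < k) ns -> sumn ns = n ->
  (size ns)`! * #|NC2 (run_string ns ms)| <= (size ns) ^ (size ns).-1 * n.+1 ^ (size ns).-1.
Proof.
move=> hsz hpos hn.
set ps := zip ns ms.
have e1 : map fst ps = ns by rewrite /ps -/(unzip1 _) unzip1_zip // hsz.
have e2 : size ps = size ns by rewrite /ps size1_zip // hsz.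
have hp : posl ps by rewrite /posl -(all_map fst (fun k => 0 < k)) e1.
have [L [cov bnd]] := main (leqnn (size ps)) hp.
rewrite /bound e1 e2 hn in bnd.
rewrite run_stringE -/ps.
apply: leq_trans bnd; rewrite leq_mul2l; apply/orP; right.
exact: card_NC2.
Qed.

Import GRing.Theory Num.Theory.
Local Open Scope ring_scope.

Theorem corollary3p6 (ns ms : seq nat) (n : nat) :
  (0 < size ns)%N ->
  size ms = size ns ->
  all (fun k => 0 < k)%N ns ->
  all (fun k => 0 < k)%N ms ->
  sumn ns = n ->
  sumn ms = n ->
  (#|NC2 (run_string ns ms)|%:R : rat)
    <= ((size ns) ^ (size ns).-1)%:R / ((size ns)`!)%:R
       * (1 + n)%:R ^+ (size ns).-1.
Proof.
move=> h0 hsz hpn hpm hn hm.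
have H := final_nat hsz hpn hn.
rewrite mulrAC ler_pdivlMr; last by rewrite ltr0n fact_gt0.
rewrite -natrX -!natrM ler_nat add1n.
by rewrite mulnC.
Qed.
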